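(* Let $2\le k\le n$, $\ell\in\{0,\dots,n-k+1\}$ and $\lambda\in\{\ell+2,\dots,n+\ell-1\}\setminus\{n\}$. The matrix $M_\ell^\lambda$ induces the matching field $\mathcal{B}_\ell^\lambda$. In particular $\mathcal{B}_\ell^\lambda$ is a coherent matching field.
   Context: A matching field for ${\rm Gr}(k,n)$ is a choice of permutation $\Lambda(I)\in S_k$ for each $k$-subset $I=\{i_1<\dots<i_k\}$ of $[n]$. A real $k\times n$ matrix $M=(m_{ij})$ induces $\Lambda$ if for every $I$, among the terms $\mathrm{sgn}(\tau)x_{\tau(1)i_1}\cdots x_{\tau(k)i_k}$ ($\tau\in S_k$) of the minor $\det X_I$ of a $k\times n$ matrix of variables $X=(x_{ij})$, the unique term of minimal weight (weight $\sum_r m_{\tau(r),i_r}$) is the one with $\tau=\Lambda(I)$; $\Lambda$ is coherent if some matrix induces it. The intermediate matching field $\mathcal{B}_\ell^\lambda$: write $I=\{p,q,r_1,\dots,r_{k-2}\}$ with $p<q<r_1<\dots<r_{k-2}$. If $\lambda<n$: $\mathcal{B}_\ell^\lambda(I)=\mathrm{id}$ if $q\le\ell$, or $p=\ell+1<\lambda<q$, or $\ell+1<p$; otherwise $(12)$. If $\lambda>n$, set $\lambda'=\lambda-n$: $\mathcal{B}_\ell^\lambda(I)=\mathrm{id}$ if $q\le\ell$, or $p\le\lambda'<q=\ell+1$, or $\ell+1<p$; otherwise $(12)$. The matrix $M_\ell^\lambda=(m_{ij})$: let $N=n+1$. Row 1 is zero. For $3\le i\le k$, $m_{ij}=N^{i-2}(n+1-j)$.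 Row 2: if $\lambda<n$, $m_{2,j}=\ell+1-j$ for $1\le j\le\ell$, $m_{2,\ell+1}=n-\lambda+\ell+1$, $m_{2,j}=n+\ell+2-j$ for $\ell+2\le j\le\lambda$, and $m_{2,j}=n+\ell+1-j$ for $\lambda+1\le j\le n$. If $\lambda>n$ (with $\lambda'=\lambda-n$): $m_{2,j}=\ell+2-j$ for $1\le j\le\lambda'$, $m_{2,j}=\ell+1-j$ for $\lambda'+1\le j\le\ell$, $m_{2,\ell+1}=\ell-\lambda'+1$, and $m_{2,j}=n+\ell+2-j$ for $\ell+2\le j\le n$. *)

(* Defs.v *)
From HB Require Import structures.
From mathcomp Require Import all_boot all_order all_algebra all_fingroup.
From mathcomp Require Import reals.
Unset Printing Implicit Defensive.
Import Order.TTheory GRing.Theory Num.Theory.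
Local Open Scope ring_scope.

(* A k-subset I = {i_1 < ... < i_k} of [n] is encoded by the strictly
   increasing map r |-> i_r from 'I_k to 'I_n  (0-based: column index j of
   the paper is the ordinal with value j-1, row index r likewise). *)
Definition increasing {k n : nat} (f : {ffun 'I_k -> 'I_n}) : bool :=
  [forall r : 'I_k, forall s : 'I_k, (r < s)%N ==> (f r < f s)%N].

(* A matching field: a permutation Lambda(I) in S_k for every k-subset I
   (only its values on increasing maps matter). *)
Definition matching_field (k n : nat) := {ffun 'I_k -> 'I_n} -> 'S_k.

(* weight of the term sgn(tau) x_{tau(1) i_1} ... x_{tau(k) i_k} of det X_I *)
Definition term_weight {R : realType} {k n : nat} (M : 'M[R]_(k, n))
  (f : {ffun 'I_k -> 'I_n}) (tau : 'S_k) : R :=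
  \sum_(r < k) M (tau r) (f r).

Definition induces {R : realType} {k n : nat} (M : 'M[R]_(k, n))
  (L : matching_field k n) : Prop :=
  forall f : {ffun 'I_k -> 'I_n}, increasing f ->
    forall tau : 'S_k, tau != L f ->
      term_weight M f (L f) < term_weight M f tau.

Definition coherent (R : realType) {k n : nat} (L : matching_field k n) : Prop :=
  exists M : 'M[R]_(k, n), induces M L.

(* the transposition (12) of S_k (identity if k < 2) *)
Definition transp12 (k : nat) : 'S_k :=
  match (insub 0%N : option 'I_k), (insub 1%N : option 'I_k) with
  | Some a, Some b => tperm a b
  | _, _ => 1%g
  end.

(* The intermediate matching field B_l^lambda.  p, q are the two smallest
   elements of I (1-based). *)
Definition Bml (k n l lam : nat) : matching_field k n := fun f =>
  let s := [seq (val (f r)).+1 | r <- enum 'I_k] in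
  let p := nth 0%N s 0 in
  let q := nth 0%N s 1 in
  let is_id :=
    if (lam < n)%N then
      [|| (q <= l)%N, [&& p == l.+1, (l.+1 < lam)%N & (lam < q)%N]
        | (l.+1 < p)%N]
    else
      let lam' := (lam - n)%N in
      [|| (q <= l)%N, [&& (p <= lam')%N, (lam' < q)%N & q == l.+1]
        | (l.+1 < p)%N] in
  if is_id then 1%g else transp12 k.

(* Entries of M_l^lambda, 1-based row i and column j. *)
Definition Mentry (k n l lam : nat) (i j : nat) : int :=
  let N : int := (n.+1)%:Z in
  if i == 1%N then 0
  else if i == 2%N then
    (if (lam < n)%N then
       (if (j <= l)%N then l%:Z + 1 - j%:Z
        else if j == l.+1 then n%:Z - lam%:Z + l%:Z + 1
        else if (j <= lam)%N then n%:Z + l%:Z + 2 - j%:Z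
        else n%:Z + l%:Z + 1 - j%:Z)
     else
       let lam' := (lam - n)%N in
       (if (j <= lam')%N then l%:Z + 2 - j%:Z
        else if (j <= l)%N then l%:Z + 1 - j%:Z
        else if j == l.+1 then l%:Z - lam'%:Z + 1
        else n%:Z + l%:Z + 2 - j%:Z))
  else N ^+ (i - 2) * (n%:Z + 1 - j%:Z).

Definition Mml (R : realType) (k n l lam : nat) : 'M[R]_(k, n) :=
  \matrix_(i < k, j < n) (Mentry k n l lam i.+1 j.+1)%:~R.

(* Main.v *)
Require Import Defs.
From HB Require Import structures.
From mathcomp Require Import all_boot all_order all_algebra all_fingroup.
From mathcomp Require Import reals zify.
Import Order.TTheory GRing.Theory Num.Theory.
Local Open Scope ring_scope.

Lemma fix_ge2 K (s : 'S_K) : (forall i : 'I_K, (2 <= i)%N -> s i = i) ->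
  forall i : 'I_K, (i < 2)%N -> (s i < 2)%N.
Proof.
move=> H i Hi; rewrite ltnNge; apply/negP => Hs.
have e := H _ Hs; move/perm_inj: e => e; rewrite e in Hs; lia.
Qed.

Lemma main_ineq (k' n : nat) (E : nat -> nat -> int) (f : {ffun 'I_k'.+2 -> 'I_n})
  (opt sigma : 'S_(k'.+2)) :
  increasing f ->
  (forall x y, (x < n)%N -> (y < n)%N -> E 0%N x = E 0%N y) ->
  (forall i x y, (0 < i < k'.+2)%N -> (x < n)%N -> (y < n)%N ->
      E i y - E i x <= n%:Z * (n.+1)%:Z ^+ (i.-1)) ->
  (forall i x y, (2 <= i < k'.+2)%N -> (x < y < n)%N ->
      E i y + (n.+1)%:Z ^+ (i.-1) <= E i x) ->
  (forall i : 'I_k'.+2, (2 <= i)%N -> opt i = i) ->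
  (forall j : 'I_k'.+2, (j < 2)%N -> j != opt (@Ordinal k'.+2 1 isT) ->
      E 1%N (f (opt (@Ordinal k'.+2 1 isT))) < E 1%N (f j)) ->
  sigma != opt ->
  \sum_(i < k'.+2) E i (f (opt i)) < \sum_(i < k'.+2) E i (f (sigma i)).
Proof.
set K := k'.+2.
move=> incf E0 Eb Ed optfix optcase sno.
rewrite -subr_gt0 -sumrB.
set D := fun i : 'I_K => E i (f (sigma i)) - E i (f (opt i)).
have fincr : forall a b : 'I_K, (a < b)%N -> (f a < f b)%N.
  by move=> a b ab; move/forallP: incf => /(_ a) /forallP /(_ b) /implyP; apply.
have D0 : forall i : 'I_K, val i = 0%N -> D i = 0.
  by move=> i i0; rewrite /D i0 (E0 (f (sigma i)) (f (opt i))) ?subrr.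
have key : forall m, (m <= K)%N -> (forall j : 'I_K, (m <= j)%N -> sigma j = opt j) ->
    0 < \sum_(i < K) D i.
  elim=> [|m IH] mK agree.
    have e : sigma = opt by apply/permP => j; apply: agree.
    by move: sno; rewrite e eqxx.
  have mK' : (m < K)%N by [].
  set mo := Ordinal mK'.
  case: (eqVneq (sigma mo) (opt mo)) => [e|ne].
    apply: IH; first lia.
    move=> j mj; case: (eqVneq (val j) m) => [jm|jm].
      have -> : j = mo by apply: val_inj.
      exact: e.
    by apply: agree; rewrite ltn_neqAle eq_sym jm mj.
  have sfix : forall i : 'I_K, (2 <= i)%N -> (m < i)%N -> sigma i = i.
    by move=> i i2 mi; rewrite agree // optfix.
  case: (ltnP m 2) => m2.
    have sfix2 : forall i : 'I_K, (2 <= i)%N -> sigma i = i.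
      by move=> i i2; apply: sfix => //; apply: leq_trans m2 i2.
    set i1 := @Ordinal K 1 isT.
    have s1 : (sigma i1 < 2)%N by apply: fix_ge2.
    have o1 : (opt i1 < 2)%N by apply: fix_ge2.
    have ne1 : sigma i1 != opt i1.
      case: (eqVneq m 1%N) => [m1|m1].
        have emo : mo = i1 by apply: val_inj; rewrite /= m1.
        by rewrite -emo.
      have m0 : m = 0%N by lia.
      apply/eqP => e1; move/eqP: ne; apply.
      have s0 : (sigma mo < 2)%N.
        have h : (mo < 2)%N by rewrite /= m0.
        exact (fix_ge2 _ sigma sfix2 mo h).
      have o0 : (opt mo < 2)%N.
        have h : (mo < 2)%N by rewrite /= m0.
        exact (fix_ge2 _ opt optfix mo h).
      have d1 : sigma mo != sigma i1 by rewrite (inj_eq perm_inj); apply/eqP => /(congr1 val); rewrite /= m0.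
      have d2 : opt mo != opt i1 by rewrite (inj_eq perm_inj); apply/eqP => /(congr1 val); rewrite /= m0.
      apply: val_inj; rewrite e1 in d1; move: s0 o0 o1 d1 d2.
      move: (sigma mo) (opt mo) (opt i1) => a b c.
      rewrite -!(inj_eq val_inj) /=; lia.
    rewrite (bigD1 i1) //= big1 ?addr0.
      by rewrite /D subr_gt0; apply: optcase.
    move=> i ni1; case: (eqVneq (nat_of_ord i) 0%N) => [i0|i0]; first by apply: D0.
    have i2 : (2 <= i)%N by move: ni1; rewrite -(inj_eq val_inj) /=; lia.
    by rewrite /D sfix2 // optfix // subrr.
  have om : opt mo = mo by apply: optfix.
  have sm : (sigma mo < mo)%N.
    case: (ltngtP (sigma mo) mo) => // [lt|/val_inj e].
      have := sfix (sigma mo) (leq_trans m2 (ltnW lt)) lt.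
      by move/perm_inj => e; move: ne; rewrite e om eqxx.
    by move: ne; rewrite e om eqxx.
  set Dn := fun i : nat => D (inord i).
  have -> : \sum_(i < K) D i = \sum_(0 <= i < K) Dn i.
    by rewrite big_mkord; apply: eq_bigr => i _; rewrite /Dn inord_val.
  rewrite (big_cat_nat _ (n:=m)) //=; last lia.
  rewrite [\sum_(m <= i < K) _]big_ltn //.
  rewrite [X in _ + (_ + X)]big_nat_cond [X in _ + (_ + X)]big1 ?addr0; last first.
    move=> i /andP[/andP[mi iK] _]; rewrite /Dn /D agree ?subrr //.
    by rewrite inordK.
  set P := (n.+1)%:Z ^+ m.-1.
  have lower : forall j, (j <= K)%N -> 1 - (n.+1)%:Z ^+ j.-1 <= \sum_(0 <= i < j) Dn i.
    elim=> [|j IHj] jK; first by rewrite big_geq // expr0 subrr.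
    rewrite big_nat_recr //=.
    have IH' := IHj (ltnW jK).
    case: j IHj IH' jK => [|j] _ IH' jK.
      by rewrite big_geq // add0r expr0 subrr /Dn D0 //; apply: inordK.
    have b : - (n%:Z * (n.+1)%:Z ^+ j) <= Dn j.+1.
      rewrite /Dn /D.
      have h := Eb j.+1 (f (sigma (inord j.+1))) (f (opt (inord j.+1))) jK (ltn_ord _) (ltn_ord _).
      move: h; rewrite /= inordK //; set Y := (n%:Z * _); lia.
    rewrite /= exprS in IH' *.
    move: IH' b; set X := _ ^+ j; rewrite /=.
    have -> : (n.+1)%:Z * X = n%:Z * X + X by rewrite -addn1 PoszD mulrDl mul1r.
    move: (n%:Z * X) => Y; move: X (\sum_(0 <= i < j.+1) Dn i) (Dn j.+1) => X S T; lia.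
  have lo := lower m (ltnW mK').
  have dm : P <= Dn m.
    rewrite /Dn /D (_ : inord m = mo); last by apply: val_inj; rewrite /= inordK.
    rewrite om lerBrDl.
    apply: (Ed m (f (sigma mo)) (f mo)); first by rewrite m2.
    by rewrite fincr //= ltn_ord.
  move: lo dm; rewrite -/P; move: P (\sum_(0 <= i < m) Dn i) (Dn m) => X S T; lia.
by apply: (key K) => // j; rewrite leqNgt ltn_ord.
Qed.
Lemma row2_bounds (k n l lam j : nat) :
  (2 <= k)%N -> (k <= n)%N -> (l <= n - k + 1)%N ->
  (l + 2 <= lam)%N -> (lam <= n + l - 1)%N -> lam != n ->
  (1 <= j <= n)%N -> 1 <= Mentry k n l lam 2 j <= n%:Z.
Proof.
move=> *; rewrite /Mentry /=.
repeat case: ifP => ?; lia.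
Qed.

Lemma row2_case (k n l lam p q : nat) :
  (2 <= k)%N -> (k <= n)%N -> (l <= n - k + 1)%N ->
  (l + 2 <= lam)%N -> (lam <= n + l - 1)%N -> lam != n ->
  (1 <= p)%N -> (p < q)%N -> (q <= n)%N ->
  let is_id :=
    if (lam < n)%N then
      [|| (q <= l)%N, [&& p == l.+1, (l.+1 < lam)%N & (lam < q)%N]
        | (l.+1 < p)%N]
    else
      let lam' := (lam - n)%N in
      [|| (q <= l)%N, [&& (p <= lam')%N, (lam' < q)%N & q == l.+1]
        | (l.+1 < p)%N] in
  if is_id then Mentry k n l lam 2 q < Mentry k n l lam 2 p
  else Mentry k n l lam 2 p < Mentry k n l lam 2 q.
Proof.
move=> ? ? ? ? ? ? ? ? ? /=; rewrite /Mentry /=.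
have [hl|hl] := boolP (lam < n)%N.
   repeat case: ifP => ?; lia.
repeat case: ifP => ?; lia.
Qed.

Lemma transp12E k' : transp12 k'.+2 = tperm ord0 (@Ordinal k'.+2 1 isT).
Proof.
rewrite /transp12.
case: insubP => [a _ ea|]; last by [].
case: insubP => [b _ eb|]; last by [].
by congr tperm; apply: val_inj.
Qed.

Theorem proposition2p8 (R : realType) (k n l lam : nat) :
  (2 <= k)%N -> (k <= n)%N -> (l <= n - k + 1)%N ->
  (l + 2 <= lam)%N -> (lam <= n + l - 1)%N -> lam != n ->
  induces (Mml R k n l lam) (Bml k n l lam) /\ coherent R (Bml k n l lam).
Proof.
move=> h1 h2 h3 h4 h5 h6.
have ind : induces (Mml R k n l lam) (Bml k n l lam); last first.
  by split => //; exists (Mml R k n l lam).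
case: k h1 h2 h3 => [|[|k']] // h1 h2 h3.
set K := k'.+2.
set E := fun i j : nat => Mentry K n l lam i.+1 j.+1.
move=> f incf tau ne.
have tw : forall t : 'S_K, term_weight (Mml R K n l lam) f t =
    (\sum_(i < K) E i (f ((t^-1)%g i)))%:~R.
  move=> t; rewrite /term_weight rmorph_sum /=.
  rewrite [RHS](reindex_inj (@perm_inj _ t)) /=.
  apply eq_bigr => r _; rewrite permK /Mml /E. by rewrite mxE.
rewrite !tw ltr_int.
set i1 := @Ordinal K 1 isT.
have rowhi : forall i j, (2 <= i)%N ->
    Mentry K n l lam i.+1 j = (n.+1)%:Z ^+ i.-1 * (n%:Z + 1 - j%:Z).
  by case=> [|[|i]] j // _; rewrite /Mentry /= subSS subn0.
have fincr : forall a b : 'I_K, (a < b)%N -> (f a < f b)%N.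
  by move=> a b ab; move/forallP: incf => /(_ a) /forallP /(_ b) /implyP; apply.
apply: main_ineq. all: try exact incf.
- by move=> x y _ _; rewrite /E /Mentry.
- move=> [|[|i]] x y /andP[hi hK] hx hy //.
    have := row2_bounds K n l lam x.+1 h1 h2 h3 h4 h5 h6 hx.
    have := row2_bounds K n l lam y.+1 h1 h2 h3 h4 h5 h6 hy.
    rewrite /E /= expr0 mulr1; lia.
  rewrite /E !rowhi //=.
  have : 0 <= (n.+1)%:Z ^+ i.+1 by apply: exprn_ge0.
  move: ((n.+1)%:Z ^+ i.+1) => P; nia.
- move=> [|[|i]] x y /andP[hi hK] /andP[hxy hy] //.
  rewrite /E !rowhi //=.
  have : 0 <= (n.+1)%:Z ^+ i.+1 by apply: exprn_ge0.
  move: ((n.+1)%:Z ^+ i.+1) => P; nia.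
- move=> i hi; rewrite /Bml; case: ifP => _.
    by rewrite invg1 perm1.
  by rewrite transp12E tpermV tpermD //; apply/eqP => e; rewrite -e in hi.
- have n0 : nth 0%N [seq (val (f r)).+1 | r <- enum 'I_K] 0 = (f ord0).+1.
    by rewrite (nth_map ord0) ?size_enum_ord // (nth_ord_enum ord0 ord0).
  have n1 : nth 0%N [seq (val (f r)).+1 | r <- enum 'I_K] 1 = (f i1).+1.
    by rewrite (nth_map ord0) ?size_enum_ord // (nth_ord_enum ord0 i1).
  have hc := row2_case K n l lam (f ord0).+1 (f i1).+1 h1 h2 h3 h4 h5 h6 isT
    (fincr ord0 i1 isT) (ltn_ord _).
  move: hc; rewrite /Bml /= n0 n1.
  have e0 : forall pj : (0 < K)%N, Ordinal pj = ord0 by move=> pj; apply: val_inj.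
  have e1 : forall pj : (1 < K)%N, Ordinal pj = i1 by move=> pj; apply: val_inj.
  case: ifP => _ hc [[|[|j]] pj] //= _.
  + by rewrite invg1 perm1 e0 => _; exact: hc.
  + by rewrite invg1 perm1 e1 eqxx.
  + by rewrite transp12E tpermV tpermR e0 eqxx.
  + by rewrite transp12E tpermV tpermR e1 => _; exact: hc.
- apply/eqP => e; move/eqP: ne; apply.
  by rewrite -(invgK tau) e invgK.
Qed.
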